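(* Consider the interleaved updating scheme in which, for every round $k$, agent $i$ and micro-step $j\in\{0,\dots,K_i-1\}$, the update is $\pi^i_{k,j+1}\in\arg\max_{\hat\pi^i}F_{k,i,j}(\hat\pi^i)$ (maximum over all policies of agent $i$, assumed attained). Then every micro-step satisfies $F_{k,i,j}(\pi^i_{k,j+1})\ge 0$, and for every round $k$, $J(\pi_{k+1})\ge J(\pi_k)$.
   Context: Cooperative Markov game $\langle \mathcal N,\mathcal S,\mathcal A,r,P,d\rangle$ with agents $\mathcal N=[n]=\{1,\dots,n\}$, finite state space $\mathcal S$, finite per-agent action spaces $\mathcal A^i$, joint action space $\mathcal A=\prod_i\mathcal A^i$, bounded joint reward $r:\mathcal S\times\mathcal A\to\mathbb R$, transition kernel $P(\cdot\mid s,a)$, initial distribution $d$, discount $\gamma\in[0,1)$. A policy of agent $i$ is a map $\pi^i(\cdot\mid s)\in\Delta(\mathcal A^i)$; a joint policy $\pi=(\pi^i)_i$ acts by $\pi(a\mid s)=\prod_i\pi^i(a^i\mid s)$; write $a=(a^{-i},a^i)$, $\pi^{-i}=(\pi^r)_{r\ne i}$. Return: $J(\pi)=\mathbb E_\pi[\sum_{t\ge0}\gamma^t r(s_t,a_t)]$ with $s_0\sim d$, $a_t\sim\pi(\cdot\mid s_t)$, $s_{t+1}\sim P(\cdot\mid s_t,a_t)$. Value $V_\pi(s)$ and action value $Q_\pi(s,a)$ are the expected discounted returns conditioned on $s_0=s$ (resp. $s_0=s,a_0=a$); joint advantage $A_\pi(s,a)=Q_\pi(s,a)-V_\pi(s)$.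 Single-agent advantage: $Q^i_\pi(s,a^i)=\mathbb E_{a^{-i}\sim\pi^{-i}(\cdot\mid s)}[Q_\pi(s,(a^{-i},a^i))]$, $A^i_\pi(s,a^i)=Q^i_\pi(s,a^i)-V_\pi(s)$. Discounted state visitation: $\rho_\pi(s)=\sum_{t\ge0}\gamma^t\Pr_\pi(s_t=s)$. Interleaved scheme: rounds $k=0,1,2,\dots$; $\pi_k=(\pi^i_k)_i$ is the joint policy at the start of round $k$ ($\pi_0$ arbitrary). Within round $k$ agents are processed in order $i=1,\dots,n$; agent $i$ performs $K_i\ge1$ micro-steps $j=0,\dots,K_i-1$ producing iterates $\pi^i_{k,0}=\pi^i_k,\pi^i_{k,1},\dots,\pi^i_{k,K_i}$, and then $\pi^i_{k+1}:=\pi^i_{k,K_i}$. Complement policy: $\tau^{-i}_k:=(\{\pi^r_{k+1}\}_{r<i},\{\pi^r_k\}_{r>i})$; baseline joint policy $\Pi_{k,i,j}:=(\tau^{-i}_k,\pi^i_{k,j})$. Surrogate: for a policy $\hat\pi^i$ of agent $i$, $L^i_{\Pi_{k,i,j}}(\tau^{-i}_k,\hat\pi^i):=\sum_{s}\rho_{\Pi_{k,i,j}}(s)\sum_{a^i}\hat\pi^i(a^i\mid s)\,A^i_{\Pi_{k,i,j}}(s,a^i)$. Constants: $\varepsilon_{k,i,j}=\max_{s,a}|A_{\Pi_{k,i,j}}(s,a)|$, $C_{k,i,j}=\frac{4\gamma\varepsilon_{k,i,j}}{(1-\gamma)^2}$. Max conditional KL: $D^{\max}_{\mathrm{KL}}(\mu,\nu)=\sup_s\mathrm{KL}(\mu(\cdot\mid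 s)\,\|\,\nu(\cdot\mid s))$. Micro-step objective: $F_{k,i,j}(\hat\pi^i):=L^i_{\Pi_{k,i,j}}(\tau^{-i}_k,\hat\pi^i)-C_{k,i,j}\,D^{\max}_{\mathrm{KL}}(\pi^i_{k,j},\hat\pi^i)$. *)

(* Defs.v *)
From HB Require Import structures.
From mathcomp Require Import all_boot all_order all_algebra.
From mathcomp Require Import all_classical all_reals all_analysis.
Unset Printing Implicit Defensive.
Import Order.TTheory GRing.Theory Num.Theory.
Local Open Scope ring_scope.

Notation jact A := {dffun forall i, A i}.
(* a policy of agent i: p s a^i = pi^i(a^i | s) *)
Notation apol R S A i := (S -> A i -> R) (only parsing).
Notation jpol R S A := (forall i, S -> A i -> R) (only parsing).

Section MarkovGame.
Variables (R : realType) (S : finType) (n : nat) (A : 'I_n -> finType).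

Definition is_policy (i : 'I_n) (p : apol R S A i) : Prop :=
  forall s, (forall a, 0 <= p s a) /\ \sum_(a : A i) p s a = 1.

Definition jprob (p : jpol R S A) (s : S) (a : jact A) : R := \prod_(i < n) p i s (a i).

Variables (r : S -> jact A -> R) (P : S -> jact A -> S -> R) (d : S -> R) (gamma : R).

(* state distribution Pr_pi(s_t = .) when s_0 ~ mu0 *)
Fixpoint stdist (p : jpol R S A) (mu0 : S -> R) (t : nat) : S -> R :=
  match t with
  | 0 => mu0
  | t'.+1 => fun s' => \sum_(s : S) stdist p mu0 t' s *
                        \sum_(a : jact A) jprob p s a * P s a s'
  end.

(* expected discounted return E_pi[sum_t gamma^t r(s_t,a_t)] with s_0 ~ mu0 *)
Definition ret (p : jpol R S A) (mu0 : S -> R) : R :=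
  \big[+%R/0%R]_(0 <= t <oo)
     (gamma ^+ t * \sum_(s : S) stdist p mu0 t s *
                    \sum_(a : jact A) jprob p s a * r s a).

Definition J (p : jpol R S A) : R := ret p d.

Definition V (p : jpol R S A) (s : S) : R := ret p (fun s' => (s' == s)%:R).

(* conditioned on s_0 = s, a_0 = a: reward r(s,a) then s_1 ~ P(.|s,a), p onwards *)
Definition Q (p : jpol R S A) (s : S) (a : jact A) : R := r s a + gamma * ret p (P s a).

Definition Adv (p : jpol R S A) (s : S) (a : jact A) : R := Q p s a - V p s.

Definition Qi (p : jpol R S A) (i : 'I_n) (s : S) (ai : A i) : R :=
  \sum_(a : jact A | a i == ai) (\prod_(q < n | q != i) p q s (a q)) * Q p s a.

Definition Ai (p : jpol R S A) (i : 'I_n) (s : S) (ai : A i) : R := Qi p i s ai - V p s.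

Definition rho (p : jpol R S A) (s : S) : R :=
  \big[+%R/0%R]_(0 <= t <oo) (gamma ^+ t * stdist p d t s).

Definition surr (p : jpol R S A) (i : 'I_n) (phat : apol R S A i) : R :=
  \sum_(s : S) rho p s * \sum_(ai : A i) phat s ai * Ai p i s ai.

Definition eps (p : jpol R S A) : R :=
  \big[Num.max/0]_(s : S) \big[Num.max/0]_(a : jact A) `|Adv p s a|.

Definition Cst (p : jpol R S A) : R := 4 * gamma * eps p / (1 - gamma) ^+ 2.

(* KL(mu || nu) on a finite type, in the extended reals:
   0 log(0/.) = 0, and mu a > 0 = nu a gives +oo *)
Definition KL (T : finType) (mu nu : T -> R) : \bar R :=
  \big[adde/0%E]_(a : T)
     (if mu a == 0%R then 0%E
      else if nu a == 0%R then +oo%E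
      else EFin (mu a * ln (mu a / nu a))).

Definition DmaxKL (i : 'I_n) (mu nu : apol R S A i) : \bar R :=
  \big[maxe/-oo%E]_(s : S) KL (A i) (mu s) (nu s).

Definition Fobj (Pi : jpol R S A) (i : 'I_n) (phat : apol R S A i) : \bar R :=
  ((surr Pi i phat)%:E - (Cst Pi)%:E * DmaxKL i (Pi i) phat)%E.

(* interleaved scheme: pik k = pi_k, micro k i j = p^i_{k,j} *)
Definition compl (pik : nat -> jpol R S A) (k : nat) (i : 'I_n) : jpol R S A :=
  fun q => if (q < i)%N then pik k.+1 q else pik k q.

Definition baseline (pik : nat -> jpol R S A) (micro : nat -> forall q : 'I_n, nat -> apol R S A q)
  (k : nat) (i : 'I_n) (j : nat) : jpol R S A :=
  fun q => if q == i then micro k q j else compl pik k i q.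
End MarkovGame.

Arguments is_policy {R S n A i} p.
Arguments J {R S n A} r P d gamma p.
Arguments Fobj {R S n A} r P d gamma Pi i phat.
Arguments baseline {R S n A} pik micro k i j.

(* Main.v *)
Require Import Defs.
From HB Require Import structures.
From mathcomp Require Import all_boot all_order all_algebra.
From mathcomp Require Import all_classical all_reals all_analysis.
From mathcomp Require Import ring lra.
Import Order.TTheory GRing.Theory Num.Theory.
Import numFieldNormedType.Exports.
Local Open Scope classical_set_scope.
Local Open Scope ring_scope.

Lemma CS_fin (R : realType) (T : finType) (x y : T -> R) :
  (\sum_i x i * y i) ^+ 2 <= (\sum_i x i ^+ 2) * (\sum_i y i ^+ 2).
Proof.
have sq : forall i j, (x i * y j - x j * y i) ^+ 2 =
   x i ^+ 2 * y j ^+ 2 + x j ^+ 2 * y i ^+ 2 - 2 * ((x i * y i) * (x j * y j)).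
  by move=> i j; ring.
have A1 : \sum_i \sum_j x i ^+ 2 * y j ^+ 2 = (\sum_i x i ^+ 2) * (\sum_i y i ^+ 2).
  by rewrite mulr_suml; apply: eq_bigr => i _; rewrite mulr_sumr.
have A2 : \sum_i \sum_j x j ^+ 2 * y i ^+ 2 = (\sum_i x i ^+ 2) * (\sum_i y i ^+ 2).
  by rewrite exchange_big /= A1.
have A3 : \sum_i \sum_j 2 * ((x i * y i) * (x j * y j)) = 2 * (\sum_i x i * y i) ^+ 2.
  rewrite expr2 mulr_suml mulr_sumr; apply: eq_bigr => i _.
  by rewrite !mulr_sumr; apply: eq_bigr => j _; ring.
have E : \sum_i \sum_j (x i * y j - x j * y i) ^+ 2 =
   2 * ((\sum_i x i ^+ 2) * (\sum_i y i ^+ 2) - (\sum_i x i * y i) ^+ 2).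
  under eq_bigr => i _ do under eq_bigr => j _ do rewrite sq.
  under eq_bigr => i _ do rewrite sumrB big_split /=.
  by rewrite sumrB big_split /= A1 A2 A3; ring.
have H0 : 0 <= \sum_i \sum_j (x i * y j - x j * y i) ^+ 2.
  by apply: sumr_ge0 => i _; apply: sumr_ge0 => j _; exact: sqr_ge0.
rewrite E in H0; lra.
Qed.

Lemma ln_le (R : realType) (x : R) : 0 < x -> ln x <= x - 1.
Proof.
move=> x0; have := @le_ln1Dx R (x - 1); rewrite (_ : 1 + (x - 1) = x); last by ring.
by apply; lra.
Qed.

Lemma term_bound (R : realType) (mu nu : R) : 0 < mu -> 0 < nu ->
  2 * (mu - Num.sqrt mu * Num.sqrt nu) <= mu * ln (mu / nu).
Proof.
move=> m0 n0.
set u := Num.sqrt mu; set v := Num.sqrt nu.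
have u0 : 0 < u by rewrite sqrtr_gt0.
have v0 : 0 < v by rewrite sqrtr_gt0.
have mu2 : mu = u ^+ 2 by rewrite sqr_sqrtr // ltW.
have nu2 : nu = v ^+ 2 by rewrite sqr_sqrtr // ltW.
have E : mu / nu = (u / v) ^+ 2 by rewrite mu2 nu2 expr_div_n.
have uvp : 0 < u / v by rewrite divr_gt0.
have vup : 0 < v / u by rewrite divr_gt0.
rewrite E lnXn //.
have L1 : ln (u / v) = - ln (v / u).
  rewrite !ln_div ?posrE //; ring.
have L2 : 1 - v / u <= ln (u / v) by rewrite L1; have := ln_le _ _ vup; lra.
have -> : 2 * (mu - u * v) = mu * (2 * (1 - v / u)).
  rewrite mu2; field; exact: lt0r_neq0.
rewrite mulr2n -mulr2n mulr_natl.
apply: ler_wpM2l; first by rewrite mu2 sqr_ge0.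
rewrite mulr2n; lra.
Qed.

Lemma KL_ge (R : realType) (T : finType) (mu nu : T -> R) :
  (forall a, 0 <= mu a) -> (forall a, 0 <= nu a) ->
  \sum_a mu a = 1 -> \sum_a nu a = 1 ->
  (((\sum_a `|nu a - mu a|) ^+ 2 / 4)%:E <= KL R T mu nu)%E.
Proof.
move=> Hm Hn Hm1 Hn1.
pose u a := Num.sqrt (mu a); pose v a := Num.sqrt (nu a).
have u0 : forall a, 0 <= u a by move=> a; exact: sqrtr_ge0.
have v0 : forall a, 0 <= v a by move=> a; exact: sqrtr_ge0.
have mu2 : forall a, mu a = u a ^+ 2 by move=> a; rewrite sqr_sqrtr.
have nu2 : forall a, nu a = v a ^+ 2 by move=> a; rewrite sqr_sqrtr.
have KLge : ((\sum_a 2 * (mu a - u a * v a))%:E <= KL R T mu nu)%E.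
  rewrite /KL -sumEFin; apply: lee_sum => a _.
  case: eqP => [m0|/eqP mn0].
    by rewrite /u m0 sqrtr0 mul0r subrr mulr0.
  case: eqP => [_|/eqP nn0]; first exact: leey.
  rewrite lee_fin; apply: term_bound.
    by rewrite lt_neqAle eq_sym mn0 Hm.
  by rewrite lt_neqAle eq_sym nn0 Hn.
set H := \sum_a (u a - v a) ^+ 2.
have Hsum : \sum_a 2 * (mu a - u a * v a) = H.
  apply/eqP; rewrite -subr_eq0 -sumrB; apply/eqP.
  transitivity (\sum_a (mu a - nu a)).
    by apply: eq_bigr => a _; rewrite [in RHS]mu2 [in RHS]nu2 mu2; ring.
  by rewrite sumrB Hm1 Hn1 subrr.
have Hd : \sum_a `|nu a - mu a| = \sum_a `|u a - v a| * (u a + v a).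
  apply: eq_bigr => a _.
  rewrite mu2 nu2 (_ : v a ^+ 2 - u a ^+ 2 = (v a - u a) * (v a + u a)); last by ring.
  by rewrite normrM distrC (ger0_norm (addr_ge0 (v0 a) (u0 a))) [v a + _]addrC.
have Hcs := CS_fin _ _ (fun a => `|u a - v a|) (fun a => u a + v a).
have HH : \sum_a `|u a - v a| ^+ 2 = H.
  by apply: eq_bigr => a _; rewrite real_normK // num_real.
have H4 : \sum_a (u a + v a) ^+ 2 = 4 - H.
  apply/eqP; rewrite -subr_eq0; apply/eqP.
  transitivity (\sum_a (2 * mu a + 2 * nu a) - 4).
    rewrite /H opprB addrA -big_split /=; congr (_ - _).
    by apply: eq_bigr => a _; rewrite mu2 nu2; ring.
  by rewrite big_split /= -!mulr_sumr Hm1 Hn1; ring.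
have H0 : 0 <= H by apply: sumr_ge0 => a _; exact: sqr_ge0.
rewrite HH H4 /= in Hcs.
apply: le_trans KLge; rewrite lee_fin Hsum Hd.
move: Hcs; set dd := (\sum_a _ * _) ^+ 2 => Hcs.
have dd0 : 0 <= dd by exact: sqr_ge0.
nra.
Qed.

Lemma sum_prod_dffun (R : comRingType) (I : finType) (T_ : I -> finType)
  (f : forall i, T_ i -> R) :
  \sum_(a : {dffun forall i, T_ i}) \prod_i f i (a i) = \prod_i \sum_(x : T_ i) f i x.
Proof.
pose P_ := fun i => [ffun x : T_ i => f i x].
transitivity (\prod_i \sum_(x : T_ i) P_ i x); last first.
  by apply: eq_bigr => i _; apply: eq_bigr => x _; rewrite ffunE.
under eq_bigr => i _ do rewrite (big_tag (fun i => P_ i) i).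
rewrite (bigA_distr_big_dep _ (fun i j => untag 0 (P_ i) j)).
rewrite -(big_fprod _ _ P_).
rewrite (reindex (@dffun_of_fprod _ T_)); last exact/onW_bij/dffun_of_fprod_bij.
apply: eq_bigr => t _; apply: eq_bigr => i _.
by rewrite /dffun_of_fprod !ffunE.
Qed.

Lemma lim_lin (R : realType) (I : finType) (c : I -> R) (u : I -> nat -> R) (l : I -> R) (b : R) :
  (forall i, u i N @[N --> \oo] --> l i) ->
  b + \sum_i c i * u i N @[N --> \oo] --> b + \sum_i c i * l i.
Proof.
move=> H; apply: cvgD; first exact: cvg_cst.
rewrite unlock /=.
elim: (index_enum I) => [|i s IH] /=.
  exact: cvg_cst.
apply: cvgD => //.
by apply: cvgM => //; exact: cvg_cst.
Qed.

Lemma lim_lin1 (R : realType) (c : R) (u : nat -> R) (l : R) (b : R) :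
  u N @[N --> \oo] --> l ->
  b + c * u N @[N --> \oo] --> b + c * l.
Proof.
move=> H; apply: cvgD; first exact: cvg_cst.
by apply: cvgM => //; exact: cvg_cst.
Qed.

Section MG.
Variables (R : realType) (S : finType) (n : nat) (A : 'I_n -> finType)
  (r : S -> jact A -> R) (P : S -> jact A -> S -> R) (d : S -> R) (gamma : R).
Hypothesis P_ge0 : forall s a s', 0 <= P s a s'.
Hypothesis P_sum1 : forall s a, \sum_(s' : S) P s a s' = 1.
Hypothesis g0 : 0 <= gamma.
Hypothesis g1 : gamma < 1.

Local Notation jp := (jprob R S n A).
Local Notation sd := (stdist R S n A P).
Local Notation Ret := (ret R S n A r P gamma).
Definition pol (p : jpol R S A) := forall i, is_policy (p i).
Definition Mt (p : jpol R S A) s s' := \sum_a jp p s a * P s a s'.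
Definition rp (p : jpol R S A) s := \sum_a jp p s a * r s a.
Definition delta (s0 : S) : S -> R := fun s => (s == s0)%:R.
Definition nneg (mu : S -> R) := forall s, 0 <= mu s.
Definition psum p mu N s := \sum_(0 <= t < N) gamma ^+ t * sd p mu t s.
Definition occ p mu s := \big[+%R/0%R]_(0 <= t <oo) (gamma ^+ t * sd p mu t s).

Lemma jp_ge0 p s a : pol p -> 0 <= jp p s a.
Proof. by move=> Hp; apply: prodr_ge0 => i _; exact: (Hp i s).1. Qed.

Lemma jp_sum1 p s : pol p -> \sum_a jp p s a = 1.
Proof.
by move=> Hp; rewrite /jprob (@sum_prod_dffun _ _ _ (fun i x => p i s x)); apply: big1 => i _; exact: (Hp i s).2.
Qed.

Lemma Mt_ge0 p s s' : pol p -> 0 <= Mt p s s'.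
Proof. by move=> Hp; apply: sumr_ge0 => a _; apply: mulr_ge0 => //; exact: jp_ge0. Qed.

Lemma Mt_sum1 p s : pol p -> \sum_s' Mt p s s' = 1.
Proof.
move=> Hp; rewrite /Mt exchange_big /= -(jp_sum1 p s Hp); apply: eq_bigr => a _.
by rewrite -mulr_sumr P_sum1 mulr1.
Qed.

Lemma delta_nneg s0 : nneg (delta s0).
Proof. by move=> s; rewrite /delta ler0n. Qed.

Lemma sum_delta (f : S -> R) s : \sum_s0 f s0 * delta s0 s = f s.
Proof.
rewrite (bigD1 s) //= /delta eqxx mulr1 big1 ?addr0 // => s0 Hs0.
by rewrite eq_sym (negbTE Hs0) mulr0.
Qed.

Lemma sd_ge0 p mu t s : pol p -> nneg mu -> 0 <= sd p mu t s.
Proof.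
move=> Hp Hmu; elim: t s => [|t IH] s //=.
apply: sumr_ge0 => s1 _; apply: mulr_ge0 => //; exact: (Mt_ge0 p s1 s Hp).
Qed.

Lemma sd_sum p mu t : pol p -> \sum_s sd p mu t s = \sum_s mu s.
Proof.
move=> Hp; elim: t => [|t IH] //=.
rewrite exchange_big /= -IH; apply: eq_bigr => s _.
by rewrite -mulr_sumr (Mt_sum1 p s Hp) mulr1.
Qed.

Lemma sd_S p mu t s : sd p mu t.+1 s = \sum_s1 sd p mu t s1 * Mt p s1 s.
Proof. by []. Qed.

Lemma sd_shift p mu t s :
  sd p mu t.+1 s = sd p (fun s' => \sum_s1 mu s1 * Mt p s1 s') t s.
Proof.
elim: t s => [|t IH] s //.
rewrite sd_S [RHS]sd_S.
by apply: eq_bigr => s1 _; rewrite IH.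
Qed.

Lemma sd_lin p mu t s : sd p mu t s = \sum_s0 mu s0 * sd p (delta s0) t s.
Proof.
elim: t s => [|t IH] s /=; first by rewrite sum_delta.
under eq_bigr => s1 _ do rewrite IH mulr_suml.
rewrite exchange_big /=; apply: eq_bigr => s0 _.
by rewrite mulr_sumr; apply: eq_bigr => s1 _; rewrite mulrA.
Qed.

Lemma geo N : (1 - gamma) * \sum_(0 <= t < N) gamma ^+ t = 1 - gamma ^+ N.
Proof.
elim: N => [|N IH]; first by rewrite big_geq // expr0 mulr0 subrr.
rewrite big_nat_recr //= mulrDr IH exprS; ring.
Qed.

Lemma geo_le N : \sum_(0 <= t < N) gamma ^+ t <= (1 - gamma)^-1.
Proof.
have gp : 0 < 1 - gamma by rewrite subr_gt0.
rewrite -(ler_pM2l gp) mulfV ?gt_eqF // geo lerBlDr lerDl.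
exact: exprn_ge0.
Qed.

Lemma psum_le p mu N s : pol p -> nneg mu ->
  psum p mu N s <= (\sum_s mu s) * (1 - gamma)^-1.
Proof.
move=> Hp Hmu.
have Hm : forall t, sd p mu t s <= \sum_s mu s.
  move=> t; rewrite -(sd_sum p mu t Hp) (bigD1 s) //= lerDl.
  by apply: sumr_ge0 => s1 _; exact: sd_ge0.
have Hm0 : 0 <= \sum_s mu s by apply: sumr_ge0.
apply: (le_trans (y := (\sum_s mu s) * \sum_(0 <= t < N) gamma ^+ t)).
  rewrite /psum mulr_sumr; apply: ler_sum => t _.
  by rewrite mulrC; apply: ler_wpM2r => //; exact: exprn_ge0.
by apply: ler_wpM2l => //; exact: geo_le.
Qed.

Lemma psum_mono p mu s : pol p -> nneg mu ->
  {homo (fun N => psum p mu N s) : N M / (N <= M)%N >-> N <= M}.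
Proof.
move=> Hp Hmu N M NM; rewrite /psum (big_cat_nat (leq0n N) NM) /= lerDl.
by apply: sumr_ge0 => t _; apply: mulr_ge0; [exact: exprn_ge0|exact: sd_ge0].
Qed.

Lemma occ_cvg p mu s : pol p -> nneg mu ->
  psum p mu N s @[N --> \oo] --> occ p mu s.
Proof.
move=> Hp Hmu.
have : cvgn (fun N => psum p mu N s).
  apply: nondecreasing_is_cvgn; first exact: psum_mono.
  exists ((\sum_s mu s) * (1 - gamma)^-1) => _ [N _ <-]; exact: psum_le.
by [].
Qed.

Lemma occ_eq p mu s X : psum p mu N s @[N --> \oo] --> X -> occ p mu s = X.
Proof. by move=> H; apply: (cvg_lim (@Rhausdorff R)) H. Qed.

Local Notation Vv := (V R S n A r P gamma).
Local Notation Qv := (Q R S n A r P gamma).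
Definition muM p (mu : S -> R) := fun s' => \sum_s1 mu s1 * Mt p s1 s'.

Lemma muM_nneg p mu : pol p -> nneg mu -> nneg (muM p mu).
Proof.
move=> Hp Hmu s; apply: sumr_ge0 => s1 _; apply: mulr_ge0 => //; exact: Mt_ge0.
Qed.

Lemma sum_delta' (f : S -> R) s : \sum_s1 delta s s1 * f s1 = f s.
Proof.
rewrite (bigD1 s) //= /delta eqxx mul1r big1 ?addr0 // => s0 Hs0.
by rewrite (negbTE Hs0) mul0r.
Qed.

Lemma sum_delta'' (f : S -> R) s : \sum_s1 f s1 * delta s s1 = f s.
Proof.
rewrite (bigD1 s) //= /delta eqxx mulr1 big1 ?addr0 // => s0 Hs0.
by rewrite (negbTE Hs0) mulr0.
Qed.

Lemma occ_fix p mu s' : pol p -> nneg mu ->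
  occ p mu s' = mu s' + \sum_s (gamma * Mt p s s') * occ p mu s.
Proof.
move=> Hp Hmu; apply: occ_eq; rewrite -cvg_shiftS.
have E : forall N, psum p mu N.+1 s' = mu s' + \sum_s (gamma * Mt p s s') * psum p mu N s.
  move=> N; rewrite /psum big_nat_recl // expr0 mul1r; congr (_ + _).
  under [RHS]eq_bigr => s _ do rewrite mulr_sumr.
  rewrite exchange_big /=; apply: eq_bigr => t _.
  rewrite mulr_sumr; apply: eq_bigr => s _; rewrite /Mt exprS; ring.
rewrite (eq_cvg _ _ E); apply: lim_lin => s; exact: occ_cvg.
Qed.

Arguments occ_fix [p mu] s'.

Lemma occ_lin p mu s : pol p -> nneg mu ->
  occ p mu s = \sum_s0 mu s0 * occ p (delta s0) s.
Proof.
move=> Hp Hmu; apply: occ_eq.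
have E : forall N, psum p mu N s = 0 + \sum_s0 mu s0 * psum p (delta s0) N s.
  move=> N; rewrite add0r /psum; under eq_bigr => t _ do rewrite sd_lin mulr_sumr.
  rewrite exchange_big; apply: eq_bigr => s0 _; rewrite mulr_sumr.
  by apply: eq_bigr => t _; ring.
rewrite (eq_cvg _ _ E).
suff : 0 + \sum_s0 mu s0 * psum p (delta s0) N s @[N --> \oo] -->
       0 + \sum_s0 mu s0 * occ p (delta s0) s by rewrite add0r.
apply: lim_lin => s0; apply: occ_cvg => //; exact: delta_nneg.
Qed.

Lemma occ_shift p mu s : pol p -> nneg mu ->
  occ p mu s = mu s + gamma * occ p (muM p mu) s.
Proof.
move=> Hp Hmu; apply: occ_eq; rewrite -cvg_shiftS.
have E : forall N, psum p mu N.+1 s = mu s + gamma * psum p (muM p mu) N s.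
  move=> N; rewrite /psum big_nat_recl // expr0 mul1r; congr (_ + _).
  rewrite mulr_sumr; apply: eq_bigr => t _.
  by rewrite sd_shift exprS mulrA.
rewrite (eq_cvg _ _ E); apply: lim_lin1; apply: occ_cvg => //; exact: muM_nneg.
Qed.
Arguments occ_shift [p mu] s.
Arguments occ_lin [p mu] s.

Lemma occ_ge0 p mu s : pol p -> nneg mu -> 0 <= occ p mu s.
Proof.
move=> Hp Hmu; rewrite (occ_shift s Hp Hmu).
apply: addr_ge0 => //; apply: mulr_ge0 => //.
have H := occ_cvg _ _ s Hp (muM_nneg _ _ Hp Hmu).
have := nondecreasing_cvgn_le (psum_mono _ _ s Hp (muM_nneg _ _ Hp Hmu)) (cvgP _ H) 0.
by rewrite /psum big_geq // => /le_trans; apply; rewrite (cvg_lim (@Rhausdorff R) H).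
Qed.


Lemma ret_occ p mu : pol p -> nneg mu -> Ret p mu = \sum_s rp p s * occ p mu s.
Proof.
move=> Hp Hmu; rewrite /ret; apply: (cvg_lim (@Rhausdorff R)).
have E : forall N, \sum_(0 <= t < N) gamma ^+ t * \sum_s sd p mu t s * \sum_a jp p s a * r s a
   = 0 + \sum_s rp p s * psum p mu N s.
  move=> N; rewrite add0r /psum; under eq_bigr => t _ do rewrite mulr_sumr.
  rewrite exchange_big; apply: eq_bigr => s _; rewrite mulr_sumr.
  by apply: eq_bigr => t _; rewrite /rp; ring.
rewrite (eq_cvg _ _ E).
suff : 0 + \sum_s rp p s * psum p mu N s @[N --> \oo] -->
       0 + \sum_s rp p s * occ p mu s by rewrite add0r.
apply: lim_lin => s; exact: occ_cvg.
Qed.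
Arguments ret_occ [p mu].

Lemma ret_lin p mu : pol p -> nneg mu -> Ret p mu = \sum_s0 mu s0 * Vv p s0.
Proof.
move=> Hp Hmu; rewrite ret_occ //.
under eq_bigr => s _ do rewrite (occ_lin s Hp Hmu) mulr_sumr.
rewrite exchange_big; apply: eq_bigr => s0 _.
rewrite /V (ret_occ Hp (delta_nneg s0)) mulr_sumr; apply: eq_bigr => s _; ring.
Qed.
Arguments ret_lin [p mu].

Lemma V_bell p s : pol p -> Vv p s = rp p s + gamma * \sum_s' Mt p s s' * Vv p s'.
Proof.
move=> Hp; have -> : Vv p s = Ret p (delta s) by [].
rewrite (ret_occ Hp (delta_nneg s)).
under eq_bigr => s1 _ do rewrite (occ_shift s1 Hp (delta_nneg s)) mulrDr.
rewrite big_split /= sum_delta''; congr (_ + _).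
have -> : muM p (delta s) = Mt p s.
  by apply: funext => s'; rewrite /muM sum_delta'.
rewrite -(ret_lin Hp); last by move=> s'; exact: Mt_ge0.
rewrite (ret_occ Hp); last by move=> s'; exact: Mt_ge0.
by rewrite mulr_sumr; apply: eq_bigr => s1 _; ring.
Qed.

Lemma Q_eq p s a : pol p -> Qv p s a = r s a + gamma * \sum_s' P s a s' * Vv p s'.
Proof. by move=> Hp; rewrite /Q (ret_lin Hp). Qed.

Lemma J_eq p : pol p -> (forall s, 0 <= d s) -> J r P d gamma p = \sum_s d s * Vv p s.
Proof. by move=> Hp Hd; rewrite /J (ret_lin Hp). Qed.

Lemma sum_jpQ_gen p q s : pol p ->
  \sum_a jp q s a * Qv p s a = rp q s + gamma * \sum_s' Mt q s s' * Vv p s'.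
Proof.
move=> Hp.
under eq_bigr => a _ do rewrite (Q_eq p s a Hp) mulrDr.
rewrite big_split /=; congr (_ + _).
transitivity (\sum_a \sum_s' jp q s a * (gamma * (P s a s' * Vv p s'))).
  apply: eq_bigr => a _; rewrite !mulr_sumr; apply: eq_bigr => s' _; ring.
rewrite exchange_big mulr_sumr; apply: eq_bigr => s' _ /=.
rewrite /Mt mulr_suml mulr_sumr; apply: eq_bigr => a _; ring.
Qed.

Lemma sum_jpQ p s : pol p -> \sum_a jp p s a * Qv p s a = Vv p s.
Proof. by move=> Hp; rewrite (V_bell p s Hp) sum_jpQ_gen. Qed.

Lemma sum_jpAdv p s : pol p -> \sum_a jp p s a * Adv R S n A r P gamma p s a = 0.
Proof.
move=> Hp; rewrite /Adv.
under eq_bigr => a _ do rewrite mulrBr.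
by rewrite sumrB sum_jpQ // -mulr_suml jp_sum1 // mul1r subrr.
Qed.

Local Notation Advv := (Adv R S n A r P gamma).
Definition Abar p q s := \sum_a jp q s a * Advv p s a.
Definition dl (p q : jpol R S A) s := \sum_a `|jp q s a - jp p s a|.

Lemma Abar_eq p q s : pol p -> pol q ->
  Abar p q s = rp q s + gamma * \sum_s' Mt q s s' * Vv p s' - Vv p s.
Proof.
move=> Hp Hq; rewrite /Abar /Adv.
under eq_bigr => a _ do rewrite mulrBr.
by rewrite sumrB sum_jpQ_gen // -mulr_suml jp_sum1 // mul1r.
Qed.

Lemma occ_sum q mu : pol q -> nneg mu ->
  \sum_s occ q mu s = (\sum_s mu s) / (1 - gamma).
Proof.
move=> Hq Hmu.
have gp : 1 - gamma != 0 by rewrite subr_eq0 eq_sym lt_eqF.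
have E : \sum_s occ q mu s = \sum_s mu s + gamma * \sum_s occ q mu s.
  under [LHS]eq_bigr => s' _ do rewrite (occ_fix s' Hq Hmu).
  rewrite big_split /=; congr (_ + _).
  rewrite exchange_big mulr_sumr; apply: eq_bigr => s _ /=.
  by rewrite -mulr_suml -mulr_sumr (Mt_sum1 q s Hq) mulr1.
apply: (mulIf gp); rewrite mulfVK // mulrBr mulr1 {1}E; ring.
Qed.

Lemma perf_diff p q : pol p -> pol q -> nneg d ->
  J r P d gamma q - J r P d gamma p = \sum_s occ q d s * Abar p q s.
Proof.
move=> Hp Hq Hd.
have Jq : J r P d gamma q = \sum_s rp q s * occ q d s := ret_occ Hq Hd.
rewrite Jq (J_eq _ Hp Hd).
have key : forall s', \sum_s (gamma * Mt q s s') * occ q d s = occ q d s' - d s'.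
  by move=> s'; rewrite [occ q d s'](occ_fix s' Hq Hd) addrAC subrr add0r.
have -> : \sum_s occ q d s * Abar p q s = \sum_s (occ q d s * rp q s +
     occ q d s * (gamma * \sum_s' Mt q s s' * Vv p s') + occ q d s * - Vv p s).
  by apply: eq_bigr => s _; rewrite (Abar_eq _ _ s Hp Hq) !mulrDr.
rewrite !big_split /=.
have -> : \sum_s occ q d s * (gamma * \sum_s' Mt q s s' * Vv p s') =
          \sum_s' (occ q d s' - d s') * Vv p s'.
  transitivity (\sum_s \sum_s' (gamma * Mt q s s') * occ q d s * Vv p s').
    by apply: eq_bigr => s _; rewrite !mulr_sumr; apply: eq_bigr => s' _; ring.
  rewrite exchange_big; apply: eq_bigr => s' _ /=.
  by rewrite -mulr_suml key.
under [X in _ = _ + X + _]eq_bigr => s' _ do rewrite mulrBl.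
rewrite sumrB.
have -> : \sum_s occ q d s * - Vv p s = - \sum_s occ q d s * Vv p s.
  by rewrite -sumrN; apply: eq_bigr => s _; rewrite mulrN.
under [X in _ = X + _ + _]eq_bigr => s _ do rewrite mulrC.
ring.
Qed.

Lemma Abar_bound p q s e : pol p -> (forall a, `|Advv p s a| <= e) ->
  `|Abar p q s| <= e * dl p q s.
Proof.
move=> Hp He.
have -> : Abar p q s = \sum_a (jp q s a - jp p s a) * Advv p s a.
  under [RHS]eq_bigr => a _ do rewrite mulrBl.
  by rewrite sumrB sum_jpAdv // subr0.
rewrite /dl mulr_sumr; apply: (le_trans (ler_norm_sum _ _ _)).
apply: ler_sum => a _; rewrite normrM mulrC; apply: ler_wpM2r => //.
Qed.

Lemma Mt_diff p q s : pol p -> pol q ->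
  \sum_s' `|Mt q s s' - Mt p s s'| <= dl p q s.
Proof.
move=> Hp Hq.
apply: (le_trans (y := \sum_s' \sum_a `|jp q s a - jp p s a| * P s a s')).
  apply: ler_sum => s' _; rewrite /Mt -sumrB.
  apply: (le_trans (ler_norm_sum _ _ _)); apply: ler_sum => a _.
  by rewrite -mulrBl normrM (ger0_norm (P_ge0 s a s')).
rewrite exchange_big /dl; apply: ler_sum => a _ /=.
by rewrite -mulr_sumr P_sum1 mulr1.
Qed.

Lemma Delta_bound p q D : pol p -> pol q -> nneg d -> \sum_s d s = 1 ->
  (forall s, dl p q s <= D) ->
  \sum_s `|occ q d s - occ p d s| <= gamma * D / (1 - gamma) ^+ 2.
Proof.
move=> Hp Hq Hd Hd1 HD.
have gp : 0 < 1 - gamma by rewrite subr_gt0.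
set X := \sum_s `|occ q d s - occ p d s|.
have E : forall s', occ q d s' - occ p d s' =
   \sum_s gamma * (Mt q s s' - Mt p s s') * occ q d s +
   \sum_s gamma * Mt p s s' * (occ q d s - occ p d s).
  move=> s'; rewrite [occ q d s'](occ_fix s' Hq Hd) [occ p d s'](occ_fix s' Hp Hd).
  rewrite opprD addrACA subrr add0r -sumrB -big_split /=.
  by apply: eq_bigr => s _; ring.
have oqs : \sum_s occ q d s = (1 - gamma)^-1 by rewrite occ_sum // Hd1 div1r.
have H1a : \sum_s' `|\sum_s gamma * (Mt q s s' - Mt p s s') * occ q d s|
    <= gamma * D / (1 - gamma).
  apply: (le_trans (y := \sum_s' \sum_s gamma * `|Mt q s s' - Mt p s s'| * occ q d s)).
    apply: ler_sum => s' _; apply: (le_trans (ler_norm_sum _ _ _)); apply: ler_sum => s _.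
    by rewrite !normrM (ger0_norm g0) (ger0_norm (occ_ge0 _ _ _ Hq Hd)).
  rewrite exchange_big /=.
  apply: (le_trans (y := \sum_s gamma * D * occ q d s)).
    apply: ler_sum => s _; rewrite -mulr_suml -mulr_sumr.
    apply: ler_wpM2r; first exact: (occ_ge0 _ _ _ Hq Hd).
    apply: ler_wpM2l => //; exact: (le_trans (Mt_diff _ _ s Hp Hq)).
  by rewrite -mulr_sumr oqs.
have H1b : \sum_s' `|\sum_s gamma * Mt p s s' * (occ q d s - occ p d s)| <= gamma * X.
  apply: (le_trans (y := \sum_s' \sum_s gamma * Mt p s s' * `|occ q d s - occ p d s|)).
    apply: ler_sum => s' _; apply: (le_trans (ler_norm_sum _ _ _)); apply: ler_sum => s _.
    by rewrite !normrM (ger0_norm g0) (ger0_norm (Mt_ge0 _ _ _ Hp)).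
  rewrite exchange_big /= /X mulr_sumr; apply: ler_sum => s _.
  by rewrite -mulr_suml -mulr_sumr (Mt_sum1 p s Hp) mulr1.
have H1 : X <= gamma * D / (1 - gamma) + gamma * X.
  rewrite {1}/X; under eq_bigr => s' _ do rewrite E.
  apply: (le_trans (ler_sum _ (fun s' _ => ler_normD _ _))).
  by rewrite big_split /=; apply: lerD.
have -> : gamma * D / (1 - gamma) ^+ 2 = (gamma * D / (1 - gamma)) / (1 - gamma).
  by rewrite expr2 invfM mulrA.
rewrite ler_pdivlMr //.
move: H1; set c := gamma * D / (1 - gamma); nra.
Qed.

Lemma nonempty_S : \sum_s d s = 1 -> exists s0 : S, true.
Proof.
case: (pickP (@predT S)) => [s0 _|H Hd]; first by exists s0.
by move: Hd; rewrite big_pred0 // => /eqP; rewrite eq_sym oner_eq0.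
Qed.

Lemma main_bound p q e D : pol p -> pol q -> nneg d -> \sum_s d s = 1 -> 0 <= e ->
  (forall s a, `|Advv p s a| <= e) -> (forall s, dl p q s <= D) ->
  \sum_s occ p d s * Abar p q s - e * gamma * D ^+ 2 / (1 - gamma) ^+ 2
   <= J r P d gamma q - J r P d gamma p.
Proof.
move=> Hp Hq Hd Hd1 e0 He HD.
have D0 : 0 <= D.
  have [s0 _] := nonempty_S Hd1.
  apply: le_trans (HD s0); apply: sumr_ge0 => a _; exact: normr_ge0.
rewrite perf_diff //.
have HB : `|\sum_s (occ q d s - occ p d s) * Abar p q s|
    <= e * gamma * D ^+ 2 / (1 - gamma) ^+ 2.
  apply: le_trans (ler_norm_sum _ _ _) _.
  apply: (le_trans (y := \sum_s `|occ q d s - occ p d s| * (e * D))).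
    apply: ler_sum => s _; rewrite normrM; apply: ler_wpM2l => //.
    apply: le_trans (Abar_bound p q s e Hp (He s)) _.
    exact: ler_wpM2l.
  rewrite -mulr_suml.
  apply: le_trans (ler_wpM2r (mulr_ge0 e0 D0) (Delta_bound p q D Hp Hq Hd Hd1 HD)) _.
  by rewrite le_eqVlt; apply/orP; left; apply/eqP; rewrite expr2; ring.
move: HB; rewrite ler_norml => /andP [HB _].
have E : \sum_s (occ q d s - occ p d s) * Abar p q s =
   \sum_s occ q d s * Abar p q s - \sum_s occ p d s * Abar p q s.
  by rewrite -sumrB; apply: eq_bigr => s _; rewrite mulrBl.
rewrite E in HB; move: HB; lra.
Qed.

Local Notation JA := {dffun forall j : 'I_n, A j}.
Lemma jp_split p s a i : jp p s a = p i s (a i) * \prod_(j < n | j != i) p j s (a j).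
Proof. by rewrite /jprob (bigD1 i). Qed.

Lemma part_sum (F : {dffun forall j : 'I_n, A j} -> R) i :
  \sum_a F a = \sum_(ai : A i) \sum_(a : JA | a i == ai) F a.
Proof. by rewrite (partition_big (fun a : {dffun forall j : 'I_n, A j} => a i) xpredT). Qed.

Lemma marg_one p s i ai : pol p ->
  \sum_(a : JA | a i == ai) \prod_(j < n | j != i) p j s (a j) = 1.
Proof.
move=> Hp.
pose f := fun (j : 'I_n) (x : A j) =>
  if j == i then ((Tagged A x == Tagged A ai)%:R : R) else p j s x.
have E := @sum_prod_dffun R 'I_n A f.
have L : \sum_(a : jact A) \prod_j f j (a j) =
         \sum_(a : JA | a i == ai) \prod_(j < n | j != i) p j s (a j).
  rewrite [RHS]big_mkcond /=; apply: eq_bigr => a _.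
  rewrite (bigD1 i) //= /f eqxx eq_Tagged /=.
  rewrite (eq_bigr (fun j => p j s (a j))); last by move=> j /negbTE ->.
  by case: (a i == ai); rewrite ?mul1r ?mul0r.
rewrite -L E; apply: big1 => j _; rewrite /f.
case: (eqVneq j i) => [Eji|Hji].
  subst j.
  under eq_bigr => x _ do rewrite eq_Tagged /=.
  by rewrite (bigD1 ai) //= eqxx big1 ?addr0 // => x /negbTE ->.
exact: (Hp j s).2.
Qed.

Lemma dl_agent p q s i : pol p -> (forall j, j != i -> q j = p j) ->
  dl p q s = \sum_(ai : A i) `|q i s ai - p i s ai|.
Proof.
move=> Hp Hqp.
have Hpr : forall a : JA, \prod_(j < n | j != i) q j s (a j) = \prod_(j < n | j != i) p j s (a j).
  by move=> a; apply: eq_bigr => j Hj; rewrite Hqp.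
rewrite /dl (part_sum _ i); apply: eq_bigr => ai _.
rewrite -[RHS]mulr1 -(marg_one p s i ai Hp) mulr_sumr.
apply: eq_bigr => a /eqP Ha.
rewrite (jp_split q s a i) (jp_split p s a i) Hpr -mulrBl normrM Ha.
rewrite (@ger0_norm _ (\prod_(j < n | j != i) p j s (a j))) //.
by apply: prodr_ge0 => j _; exact: (Hp j s).1.
Qed.

Lemma sumAi p q s i : pol p -> pol q -> (forall j, j != i -> q j = p j) ->
  \sum_(ai : A i) q i s ai * Ai R S n A r P gamma p i s ai = Abar p q s.
Proof.
move=> Hp Hq Hqp.
have Hpr : forall a : JA, \prod_(j < n | j != i) q j s (a j) = \prod_(j < n | j != i) p j s (a j).
  by move=> a; apply: eq_bigr => j Hj; rewrite Hqp.
rewrite /Ai /Abar /Adv.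
under eq_bigr => ai _ do rewrite mulrBr.
under [in RHS]eq_bigr => a _ do rewrite mulrBr.
rewrite !sumrB -!mulr_suml (jp_sum1 q s Hq) (Hq i s).2; congr (_ - _).
rewrite (part_sum _ i); apply: eq_bigr => ai _.
rewrite /Qi mulr_sumr; apply: eq_bigr => a /eqP Ha.
by rewrite (jp_split q s a i) Hpr Ha mulrA.
Qed.

Lemma le_bigmax0 (I : finType) (F : I -> R) i : F i <= \big[Num.max/0]_j F j.
Proof. by rewrite (bigD1 i) //= le_max lexx. Qed.

Lemma bigmax_idx (I : finType) (F : I -> R) x : x <= \big[Num.max/x]_j F j.
Proof.
apply: (big_rec (fun y => x <= y)) => // j y _ Hy.
by rewrite le_max Hy orbT.
Qed.

Lemma le_bigmaxe (I : finType) (F : I -> \bar R) i : (F i <= \big[maxe/-oo%E]_j F j)%E.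
Proof. by rewrite (bigD1 i) //= le_max lexx. Qed.

Lemma step_ge (Pi Pi' : jpol R S A) i : pol Pi -> pol Pi' -> nneg d -> \sum_s d s = 1 ->
  (forall j, j != i -> Pi' j = Pi j) ->
  (0 <= Fobj r P d gamma Pi i (Pi' i))%E -> J r P d gamma Pi <= J r P d gamma Pi'.
Proof.
move=> Hp Hq Hd Hd1 Hqp HF.
set e := eps R S n A r P gamma Pi.
set D := \big[Num.max/0]_s dl Pi Pi' s.
have e0 : 0 <= e by exact: bigmax_idx.
have He : forall s a, `|Advv Pi s a| <= e.
  move=> s a; rewrite /e /eps.
  apply: (le_trans (y := \big[Num.max/0]_a `|Advv Pi s a|)); last first.
    exact: (le_bigmax0 _ (fun s => \big[Num.max/0]_a `|Advv Pi s a|) s).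
  exact: (le_bigmax0 _ (fun a => `|Advv Pi s a|) a).
have HD : forall s, dl Pi Pi' s <= D by move=> s; exact: le_bigmax0.
have MB := main_bound Pi Pi' e D Hp Hq Hd Hd1 e0 He HD.
have HL : surr R S n A r P d gamma Pi i (Pi' i) = \sum_s occ Pi d s * Abar Pi Pi' s.
  by rewrite /surr; apply: eq_bigr => s _; rewrite (sumAi Pi Pi' s i Hp Hq Hqp).
set Dk := DmaxKL R S n A i (Pi i) (Pi' i).
have HKs : forall s, (((dl Pi Pi' s) ^+ 2 / 4)%:E <= Dk)%E.
  move=> s; apply: (le_trans (y := KL R (A i) (Pi i s) (Pi' i s))); last first.
    exact: (le_bigmaxe _ (fun s => KL R (A i) (Pi i s) (Pi' i s)) s).
  rewrite (dl_agent Pi Pi' s i Hp Hqp); apply: KL_ge.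
  - exact: (Hp i s).1.
  - exact: (Hq i s).1.
  - exact: (Hp i s).2.
  - exact: (Hq i s).2.
have [s0 _] := nonempty_S Hd1.
have HKD : (0 <= D /\ ((D ^+ 2 / 4)%:E <= Dk)%E).
  apply: (big_rec (fun x => 0 <= x /\ ((x ^+ 2 / 4)%:E <= Dk)%E)).
    split => //; apply: le_trans (HKs s0); rewrite expr0n /= mul0r lee_fin.
    by apply: divr_ge0; [exact: sqr_ge0|].
  move=> s x _ [x0 Hx]; rewrite maxEle; case: ifP => // _; split => //.
  by apply: sumr_ge0 => a _; exact: normr_ge0.
case: HKD => D0 HKD.
set C := Cst R S n A r P gamma Pi.
have gp : 0 < 1 - gamma by rewrite subr_gt0.
have C0 : 0 <= C by rewrite /C /Cst; apply: divr_ge0; [apply: mulr_ge0; [apply: mulr_ge0|]|apply: exprn_ge0; exact: ltW].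
have CE : e * gamma * D ^+ 2 / (1 - gamma) ^+ 2 = C * (D ^+ 2 / 4).
  rewrite /C /Cst -/e; transitivity (e * gamma * D ^+ 2 / (1 - gamma) ^+ 2 * (4 * 4^-1)); last by ring.
  by rewrite mulfV ?mulr1 // pnatr_eq0.
have Hkey : 0 <= surr R S n A r P d gamma Pi i (Pi' i) - C * (D ^+ 2 / 4).
  clear HKs; move: HKD HF; rewrite /Fobj -/Dk -/C; clearbody Dk; case: Dk => [x| |].
  - rewrite lee_fin => HKD HF'.
    have HF2 : 0 <= surr R S n A r P d gamma Pi i (Pi' i) - C * x.
      by rewrite -lee_fin EFinB EFinM.
    apply: le_trans HF2 _; rewrite lerD2l lerN2.
    exact: ler_wpM2l.
  - move=> _ HF'; case: (eqVneq C 0) => [C00|Cn0].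
      rewrite C00 mul0r subr0 -lee_fin.
      by move: HF'; rewrite C00 mul0e sube0.
    have Cp : 0 < C by rewrite lt_neqAle eq_sym Cn0 C0.
    move: HF'; rewrite mulry (gtr0_sg Cp) mul1e.
    rewrite (_ : (- +oo)%E = (-oo)%E :> \bar R) // addeNy leeNy_eq //.
  - by rewrite leeNy_eq.
rewrite HL -CE in Hkey; move: MB Hkey; lra.
Qed.

Lemma KL_self (T : finType) (mu : T -> R) : KL R T mu mu = 0%E.
Proof.
rewrite /KL; apply: (big_rec (fun x => x = 0%E)) => // a x _ ->.
have H0 : forall y : \bar R, adde y 0%E = y by move=> y; exact: adde0.
rewrite H0.
case: eqP => // /eqP Hm.
by rewrite divff // ln1 mulr0.
Qed.

Lemma F_zero Pi i : pol Pi -> \sum_s d s = 1 -> Fobj r P d gamma Pi i (Pi i) = 0%E.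
Proof.
move=> Hp Hd1.
have Hs : surr R S n A r P d gamma Pi i (Pi i) = 0.
  rewrite /surr; apply: big1 => s _.
  rewrite (sumAi Pi Pi s i Hp Hp) //.
  by rewrite /Abar sum_jpAdv // mulr0.
have HK : DmaxKL R S n A i (Pi i) (Pi i) = 0%E.
  rewrite /DmaxKL; under eq_bigr => s _ do rewrite KL_self.
  have [s0 _] := nonempty_S Hd1.
  rewrite (bigD1 s0) //=.
  have : (\big[maxe/-oo%E]_(s | s != s0) (0%E : \bar R) <= 0)%E.
    by apply: (big_rec (fun y => y <= 0)%E) => // j y _ Hy; rewrite ge_max lexx Hy.
  by move=> H; rewrite max_l.
by rewrite /Fobj Hs HK mule0 sube0.
Qed.

Lemma final (d_ge0 : forall s, 0 <= d s) (d_sum1 : \sum_(s : S) d s = 1)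
  (K : 'I_n -> nat)
  (pik : nat -> jpol R S A)
  (micro : nat -> forall i : 'I_n, nat -> apol R S A i)
  (pi0_pol : forall i, is_policy (pik 0%N i))
  (micro0 : forall k i, micro k i 0%N = pik k i)
  (microK : forall k i, pik k.+1 i = micro k i (K i))
  (argmax_pol : forall k i j, (j < K i)%N -> is_policy (micro k i j.+1))
  (argmax_max : forall k i j, (j < K i)%N ->
     forall phat : apol R S A i, is_policy phat ->
       (Fobj r P d gamma (baseline pik micro k i j) i phat
        <= Fobj r P d gamma (baseline pik micro k i j) i (micro k i j.+1))%E) :
  (forall k i j, (j < K i)%N ->
     (0 <= Fobj r P d gamma (baseline pik micro k i j) i (micro k i j.+1))%E) /\
  (forall k, J r P d gamma (pik k) <= J r P d gamma (pik k.+1)).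
Proof.
have Hmic0 : forall k i j, (j <= K i)%N -> is_policy (pik k i) -> is_policy (micro k i j).
  move=> k i [|j] Hj Hp; first by rewrite micro0.
  exact: argmax_pol.
have Hpik : forall k i, is_policy (pik k i).
  elim=> [|k IH] i; first exact: pi0_pol.
  by rewrite microK; apply: Hmic0.
have Hmic : forall k i j, (j <= K i)%N -> is_policy (micro k i j).
  by move=> k i j Hj; apply: Hmic0.
have Hbase : forall k i j, (j <= K i)%N -> pol (baseline pik micro k i j).
  move=> k i j Hj q; rewrite /baseline /compl.
  case: (eqVneq q i) => [->|_]; first exact: Hmic.
  by case: ifP => _; exact: Hpik.
have Part1 : forall k i j, (j < K i)%N ->
     (0 <= Fobj r P d gamma (baseline pik micro k i j) i (micro k i j.+1))%E.
  move=> k i j Hj.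
  have HB := Hbase k i j (ltnW Hj).
  rewrite -(F_zero _ i HB d_sum1).
  exact: (argmax_max k i j Hj _ (HB i)).
split => // k.
pose cm (m : nat) : jpol R S A := fun q => if (q < m)%N then pik k.+1 q else pik k q.
have E0 : cm 0%N = pik k.
  by apply: functional_extensionality_dep => q; rewrite /cm ltn0.
have En : cm n = pik k.+1.
  by apply: functional_extensionality_dep => q; rewrite /cm ltn_ord.
have Step : forall m (Hm : (m < n)%N), J r P d gamma (cm m) <= J r P d gamma (cm m.+1).
  move=> m Hm; pose i := Ordinal Hm.
  have B0 : baseline pik micro k i 0 = cm m.
    apply: functional_extensionality_dep => q; rewrite /baseline /compl /cm.
    case: (eqVneq q i) => [->|_] //.
    by rewrite micro0 /= ltnn.
  have BK : baseline pik micro k i (K i) = cm m.+1.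
    apply: functional_extensionality_dep => q; rewrite /baseline /compl /cm.
    case: (eqVneq q i) => [->|Hq].
      by rewrite -microK /= ltnSn.
    have Hq' : (q : nat) != m by apply: contra Hq => /eqP Hqm; apply/eqP/val_inj.
    by have -> : (q < m.+1)%N = (q < m)%N by rewrite ltnS leq_eqVlt (negbTE Hq').
  rewrite -B0 -BK.
  have : forall j, (j <= K i)%N ->
     J r P d gamma (baseline pik micro k i 0) <= J r P d gamma (baseline pik micro k i j).
    elim=> [|j IH] Hj //.
    apply: le_trans (IH (ltnW Hj)) _.
    apply: (step_ge _ _ i).
    - exact: Hbase (ltnW Hj).
    - exact: Hbase.
    - exact: d_ge0.
    - exact: d_sum1.
    - by move=> q Hq; rewrite /baseline (negbTE Hq).
    - have -> : baseline pik micro k i j.+1 i = micro k i j.+1.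
        by rewrite /baseline eqxx.
      exact: Part1.
  by apply.
have : forall m, (m <= n)%N -> J r P d gamma (cm 0%N) <= J r P d gamma (cm m).
  elim=> [|m IH] Hm //.
  apply: le_trans (IH (ltnW Hm)) _; exact: Step.
by rewrite E0 -En; apply.
Qed.

End MG.

Theorem theorem1 (R : realType) (S : finType) (n : nat) (A : 'I_n -> finType)
  (r : S -> jact A -> R) (P : S -> jact A -> S -> R) (d : S -> R) (gamma : R)
  (P_ge0 : forall s a s', 0 <= P s a s')
  (P_sum1 : forall s a, \sum_(s' : S) P s a s' = 1)
  (d_ge0 : forall s, 0 <= d s) (d_sum1 : \sum_(s : S) d s = 1)
  (gamma_ge0 : 0 <= gamma) (gamma_lt1 : gamma < 1)
  (K : 'I_n -> nat) (K_gt0 : forall i, (0 < K i)%N)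
  (pik : nat -> jpol R S A)
  (micro : nat -> forall i : 'I_n, nat -> apol R S A i)
  (pi0_pol : forall i, is_policy (pik 0%N i))
  (micro0 : forall k i, micro k i 0%N = pik k i)
  (microK : forall k i, pik k.+1 i = micro k i (K i))
  (argmax_pol : forall k i j, (j < K i)%N -> is_policy (micro k i j.+1))
  (argmax_max : forall k i j, (j < K i)%N ->
     forall phat : apol R S A i, is_policy phat ->
       (Fobj r P d gamma (baseline pik micro k i j) i phat
        <= Fobj r P d gamma (baseline pik micro k i j) i (micro k i j.+1))%E) :
  (forall k i j, (j < K i)%N ->
     (0 <= Fobj r P d gamma (baseline pik micro k i j) i (micro k i j.+1))%E) /\
  (forall k, J r P d gamma (pik k) <= J r P d gamma (pik k.+1)).
Proof.
exact: (@final R S n A r P d gamma P_ge0 P_sum1 gamma_ge0 gamma_lt1 d_ge0 d_sum1 K pik micro pi0_pol micro0 microK argmax_pol argmax_max).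
Qed.
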